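(* Let $G$ be a graph with edge set $E$, let $C\subseteq E$ and let $k\ge1$ be an integer. Then $C$ is a circuit of $M_k(G)$ if and only if $\Delta G\langle C\rangle=k$ and $G\langle C\rangle$ is a cacti-graph, i.e. $G\langle C\rangle$ has no leaves and every component of $G\langle C\rangle$ has at least two cycles.
   Context: Graphs are finite, may have loops and parallel edges. A leaf is a vertex incident to exactly one edge, which is not a loop. $\Delta H=|E(H)|-|V(H)|$. For $X\subseteq E$, $G\langle X\rangle$ is the subgraph with edge set $X$ and vertex set the vertices incident to edges of $X$. A cacti-graph is a graph with no isolated vertices, no leaves, and no component that is a cycle. For an integer $k\ge0$, the $k$-circular matroid $M_k(G)$ is the matroid on $E$ whose family of circuits ${\cal C}_k(G)$ is the set of inclusion-minimal members of $\{C\subseteq E: C\neq\emptyset,\ |C|=|V(G\langle C\rangle)|+k\}$ (this family is the circuit family of a matroid). *)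

(* Defs.v *)
(* A graph (loops and parallel edges allowed) is given by a
   finite vertex type V, a finite edge type E and an endpoint map
   ends : E -> V * V (the pair is read as unordered; a loop has equal ends). *)
From mathcomp Require Import all_boot all_order all_algebra.
Set Implicit Arguments. Unset Strict Implicit. Unset Printing Implicit Defensive.

Section Graphs.
Variables (V E : finType) (ends : E -> V * V).

Definition inc (e : E) (v : V) : bool := ((ends e).1 == v) || ((ends e).2 == v).
Definition is_loop (e : E) : bool := (ends e).1 == (ends e).2.

Definition VX (X : {set E}) : {set V} := [set v | [exists e in X, inc e v]].

Definition DeltaX (X : {set E}) : int := (#|X|%:Z - #|VX X|%:Z)%R.

Definition kdep (k : nat) (C : {set E}) : bool :=
  (C != set0) && (#|C| == #|VX C| + k).
Definition kcircuit (k : nat) (C : {set E}) : bool := minset (kdep k) C.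

Definition leafX (X : {set E}) (v : V) : Prop :=
  exists2 e, e \in X & [/\ inc e v, ~~ is_loop e &
     (forall e', e' \in X -> inc e' v -> e' = e)].

Definition adjX (X : {set E}) : rel V :=
  fun u v => [exists e in X, (ends e == (u, v)) || (ends e == (v, u))].
Definition compX (X : {set E}) (v : V) : {set V} := [set u | connect (adjX X) v u].

Definition degX (X : {set E}) (v : V) : nat :=
  (\sum_(e in X) (((ends e).1 == v) + ((ends e).2 == v)))%N.

(* the component of G<X> containing v is a cycle: a connected 2-regular graph *)
Definition comp_is_cycle (X : {set E}) (v : V) : Prop :=
  forall u, u \in compX X v -> degX X u = 2%N.

Definition cacti (X : {set E}) : Prop :=
  [/\ forall v, v \in VX X -> exists2 e, e \in X & inc e v,
       forall v, v \in VX X -> ~ leafX X v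
     & forall v, v \in VX X -> ~ comp_is_cycle X v].

End Graphs.

(* Main.v *)
Require Import Defs.
From mathcomp Require Import all_boot all_order all_algebra.
From mathcomp Require Import zify.
Set Implicit Arguments. Unset Strict Implicit. Unset Printing Implicit Defensive.

Section Aux.
Variables (V E : finType) (ends : E -> V * V).

Definition mult (S : {set V}) (e : E) : nat :=
  (((ends e).1 \in S) + ((ends e).2 \in S))%N.

Lemma inVX (X : {set E}) v : (v \in VX ends X) = [exists e in X, inc ends e v].
Proof. by rewrite inE. Qed.

Lemma VXS (B C : {set E}) : B \subset C -> VX ends B \subset VX ends C.
Proof.
move=> sBC; apply/subsetP => v; rewrite !inVX => /existsP[e /andP[eB ie]].
by apply/existsP; exists e; rewrite (subsetP sBC).
Qed.

Lemma sum_eqb (S : {set V}) (a : V) : (\sum_(u in S) (a == u) = (a \in S))%N.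
Proof.
case: (boolP (a \in S)) => H.
  rewrite (bigD1 a) //= eqxx big1 // => u /andP[_ /negbTE].
  by rewrite eq_sym => ->.
by rewrite big1 // => u uS; apply/eqP; rewrite eqb0; apply: contra H => /eqP ->.
Qed.

Lemma handshake (X : {set E}) (S : {set V}) :
  (\sum_(u in S) degX ends X u = \sum_(e in X) mult S e)%N.
Proof.
rewrite /degX exchange_big; apply: eq_bigr => e _.
by rewrite big_split /= !sum_eqb.
Qed.

Lemma sum_mem (C D : {set E}) : D \subset C ->
  (\sum_(e in C) (e \in D) = #|D|)%N.
Proof.
move=> sDC; rewrite -sum1_card (big_setID D) /= (setIidPr sDC).
rewrite [X in (_ + X)%N]big1 ?addn0; last by move=> e; rewrite inE => /andP[/negbTE ->].
by apply: eq_bigr => e ->.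
Qed.

Lemma deg_pos (X : {set E}) u : (0 < degX ends X u)%N -> u \in VX ends X.
Proof.
move=> H; rewrite inVX; case: (boolP [exists e in X, inc ends e u]) => //.
rewrite negb_exists => /forallP Hn.
move: H; rewrite /degX big1 // => e eX.
have := Hn e; rewrite eX /= /inc negb_or => /andP[/negbTE -> /negbTE ->].
by [].
Qed.

End Aux.

Section Main.
Variables (V E : finType) (ends : E -> V * V) (k : nat).
Hypothesis k_gt0 : (0 < k)%N.

Lemma descent n (B : {set E}) : #|B| = n -> (#|VX ends B| + k <= #|B|)%N ->
  exists2 B' : {set E}, B' \subset B & kdep ends k B'.
Proof.
elim: n B => [|n IH] B cB H; first by lia.
case: (ltngtP (#|VX ends B| + k) #|B|) H => // Hlt _.
  have : (0 < #|B|)%N by lia.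
  case/card_gt0P => e eB.
  have c1 : #|B :\ e| = n by move: (cardsD1 e B); rewrite eB; lia.
  have sV : (#|VX ends (B :\ e)| <= #|VX ends B|)%N.
    by apply: subset_leq_card; apply: VXS; apply: subsetDl.
  have [B' sB' kB'] := IH (B :\ e) c1 ltac:(lia).
  exists B' => //; apply: subset_trans sB' (subsetDl _ _).
exists B => //; rewrite /kdep -Hlt eqxx andbT.
by apply/eqP => B0; move: Hlt; rewrite B0 cards0; lia.
Qed.

Lemma kcirc_lt (C B : {set E}) : kcircuit ends k C -> B \subset C -> B != C ->
  (#|B| < #|VX ends B| + k)%N.
Proof.
move=> /minsetP [_ minC] sBC nBC; rewrite ltnNge; apply/negP => H.
have [B' sB' kB'] := descent erefl H.
have eB' := minC B' kB' (subset_trans sB' sBC).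
move/negP: nBC; apply; rewrite eqEsubset sBC /=.
by rewrite -eB'.
Qed.

End Main.

Section Graph.
Variables (V E : finType) (ends : E -> V * V).

Definition m1 (u : V) (e : E) : nat := (((ends e).1 == u) + ((ends e).2 == u))%N.

Lemma deg_ge (X : {set E}) u e : e \in X -> (m1 u e <= degX ends X u)%N.
Proof. by move=> eX; rewrite /degX (bigD1 e) //= leq_addr. Qed.

Lemma deg_ge2 (X : {set E}) u e f : e \in X -> f \in X -> f != e ->
  (m1 u e + m1 u f <= degX ends X u)%N.
Proof.
move=> eX fX fe; rewrite /degX (bigD1 e) //= leq_add2l.
by rewrite (bigD1 f) /= ?fX ?fe //= leq_addr.
Qed.

Lemma deg_two (X : {set E}) u : u \in VX ends X -> ~ leafX ends X u ->
  (2 <= degX ends X u)%N.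
Proof.
rewrite inVX => /existsP[e /andP[eX ie]] nl.
rewrite leqNgt; apply/negP => Hd; apply: nl; exists e => //; split => //.
  apply/negP => lp; have := deg_ge u eX; rewrite /m1.
  move: ie lp Hd; rewrite /inc /is_loop.
  case: (ends e) => a b /= /orP[] /eqP -> /eqP ->; rewrite eqxx /=; lia.
move=> f fX iff; case: (eqVneq f e) => // fe.
have := deg_ge2 u eX fX fe; rewrite /m1.
move: ie iff Hd; rewrite /inc.
case: (ends e) => a b; case: (ends f) => c d /=.
by case: (a == u); case: (b == u); case: (c == u); case: (d == u) => //=; lia.
Qed.

Lemma conn_closed (X : {set E}) (N : {set V}) :
  (forall f w, f \in X -> w \in N -> inc ends f w ->
     ((ends f).1 \in N) && ((ends f).2 \in N)) ->
  forall u w, u \in N -> connect (adjX ends X) u w -> w \in N.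
Proof.
move=> H u w uN /connectP[p pth ->]; elim: p u uN pth => //= x p IH u uN.
case/andP => a pth; apply: IH pth.
case/existsP: a => f /andP[fX /orP[/eqP e|/eqP e]];
  by have := H f u fX uN; rewrite /inc e /= eqxx ?orbT => /(_ isT) /andP[].
Qed.

Lemma comp_closed (X : {set E}) v f w : f \in X -> w \in compX ends X v ->
  inc ends f w -> ((ends f).1 \in compX ends X v) && ((ends f).2 \in compX ends X v).
Proof.
move=> fX; rewrite /inc /compX !inE; case E0: (ends f) => [a b] /= wc.
case/orP => /eqP ?; subst w; rewrite wc /=.
  apply: connect_trans wc (connect1 _); apply/existsP; exists f.
  by rewrite fX E0 eqxx.
rewrite andbT. apply: connect_trans wc (connect1 _); apply/existsP; exists f.
by rewrite fX E0 eqxx orbT.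
Qed.

End Graph.

Lemma mult_le2 (V E : finType) (ends : E -> V * V) (S : {set V}) e :
  (mult ends S e <= 2)%N.
Proof. by rewrite /mult; case: (_ \in S); case: (_ \in S). Qed.

Lemma delta_nat (V E : finType) (ends : E -> V * V) (C : {set E}) (k : nat) :
  DeltaX ends C = Posz k <-> #|C| = (#|VX ends C| + k)%N.
Proof. rewrite /DeltaX; split; lia. Qed.

Theorem mainTheorem8 (V E : finType) (ends : E -> V * V) (C : {set E}) (k : nat) :
  (1 <= k)%N ->
  (kcircuit ends k C <-> (DeltaX ends C = Posz k /\ cacti ends C)).
Proof.
move=> k1; rewrite delta_nat; split.
- move=> kC; have kC' := kC; case/minsetP: kC' => /andP[_ /eqP HC] _.
  split => //; split.
  + by move=> v; rewrite inVX => /existsP[e /andP[eC ie]]; exists e.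
  + move=> v vC [e eC [ie nl uq]].
    have nBC : C :\ e != C.
      by apply/eqP => h; move: eC; rewrite -{1}h !inE eqxx.
    have lt := kcirc_lt k1 kC (subsetDl C [set e]) nBC.
    have sV : VX ends (C :\ e) \subset VX ends C :\ v.
      apply/subsetP => w; rewrite inVX => /existsP[f /andP[fB ifw]].
      move: fB; rewrite !inE => /andP[fe fC].
      rewrite -inVX; apply/andP; split.
        by apply/eqP => wv; subst w; move: (uq f fC ifw); apply/eqP.
      by rewrite inVX; apply/existsP; exists f; rewrite fC.
    have := subset_leq_card sV.
    move: (cardsD1 e C) (cardsD1 v (VX ends C)); rewrite eC vC; lia.
  + move=> v vC cyc.
    set K := compX ends C v.
    set D := [set e in C | (ends e).1 \in K].
    set B := C :\: D.
    have closeK := @comp_closed _ _ ends C v.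
    have sDC : D \subset C by apply/subsetP => e; rewrite inE => /andP[].
    have multK : forall e, e \in C -> mult ends K e = (2 * (e \in D))%N.
      move=> e eC; rewrite /D inE eC /=.
      case: (boolP ((ends e).1 \in K)) => e1.
        have /andP[_ e2] := closeK e _ eC e1 ltac:(by rewrite /inc eqxx); move: e2; rewrite -/K => e2; by rewrite /mult e1 e2.
      case: (boolP ((ends e).2 \in K)) => e2; last by rewrite /mult (negbTE e1) (negbTE e2).
      have := closeK e _ eC e2; rewrite /inc eqxx orbT => /(_ isT) /andP[h _].
      by rewrite h in e1.
    have KV : K \subset VX ends C.
      by apply/subsetP => u uK; apply: deg_pos; rewrite (cyc u uK).
    have eKD : #|K| = #|D|.
      have h := handshake ends C K.
      rewrite (eq_bigr (fun _ => 2)) in h; last by move=> u uK; exact: cyc.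
      rewrite (eq_bigr (fun e => 2 * (e \in D)))%N in h; last by move=> e eC; exact: multK.
      by move: h; rewrite sum_nat_const -big_distrr /= sum_mem //; lia.
    have sV : VX ends B \subset VX ends C :\: K.
      apply/subsetP => w; rewrite inVX => /existsP[f /andP[fB ifw]].
      move: fB; rewrite !inE => /andP[fD fC].
      rewrite -inVX; apply/andP; split.
        apply/negP => wK; move: fD; rewrite fC /=.
        have /andP[h _] := closeK f w fC ltac:(by rewrite /compX inE) ifw. by move: h; rewrite /compX inE => ->.
      by rewrite inVX; apply/existsP; exists f; rewrite fC.
    have nBC : B != C.
      have vK : v \in K by rewrite /K /compX inE connect0.
      move: (@deg_pos _ _ ends C v ltac:(by rewrite (cyc v vK))); rewrite inVX => /existsP[e /andP[eC ie]].
      have /andP[e1 _] := closeK e v eC vK ie.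
      apply/eqP => h; have : e \in B by rewrite h.
      by rewrite /B /D !inE eC; move: e1; rewrite /K /compX inE => ->.
    have lt := kcirc_lt k1 kC (subsetDl C D) nBC.
    have := subset_leq_card sV.
    have := subset_leq_card sDC; have := subset_leq_card KV.
    rewrite cardsD (setIidPr KV).
    move: lt; rewrite /B cardsD (setIidPr sDC); lia.
- case=> HC [_ noleaf nocyc]; apply/minsetP; split.
    rewrite /kdep HC eqxx andbT; apply/eqP => C0; move: HC.
    by rewrite C0 cards0; lia.
  move=> B /andP[_ /eqP HB] sBC; apply/eqP; apply/negPn/negP => nBC.
  have sV := VXS ends sBC.
  set N := VX ends C :\: VX ends B; set D := C :\: B.
  have cN : #|N| = (#|VX ends C| - #|VX ends B|)%N.
    by rewrite /N cardsD (setIidPr sV).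
  have cD : #|D| = (#|C| - #|B|)%N by rewrite /D cardsD (setIidPr sBC).
  have lV := subset_leq_card sV; have lB := subset_leq_card sBC.
  have eND : #|N| = #|D| by lia.
  have sDC : D \subset C by apply: subsetDl.
  have multB : forall e, e \in C -> (mult ends N e <= 2 * (e \in D))%N.
    move=> e eC; rewrite /D inE eC andbT.
    case: (boolP (e \in B)) => eB /=; last by rewrite muln1 mult_le2.
    rewrite /mult /N !inE.
    have -> : [exists e0 in B, inc ends e0 (ends e).1] by apply/existsP; exists e; rewrite eB /inc eqxx.
    by have -> : [exists e0 in B, inc ends e0 (ends e).2] by apply/existsP; exists e; rewrite eB /inc eqxx orbT.
  have degN : forall u, u \in N -> (2 <= degX ends C u)%N.
    move=> u; rewrite inE => /andP[_ uC]; exact: (deg_two uC (noleaf u uC)).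
  have S1 := leqif_sum (fun u uN => leqif_eq (degN u uN)).
  have S2 := leqif_sum (fun e eC => leqif_eq (multB e eC)).
  have Heq1 : (\sum_(u in N) 2 = \sum_(u in N) degX ends C u)%N.
    apply/eqP; rewrite eqn_leq S1.1 /=.
    rewrite handshake (leq_trans S2.1) //.
    by rewrite -big_distrr /= sum_mem // sum_nat_const eND mulnC.
  have Heq2 : (\sum_(e in C) mult ends N e = \sum_(e in C) 2 * (e \in D))%N.
    apply/eqP; rewrite eqn_leq S2.1 /= -handshake -Heq1 sum_nat_const.
    by rewrite -big_distrr /= sum_mem // eND mulnC.
  have D2 : forall e, e \in C -> mult ends N e = (2 * (e \in D))%N.
    move=> e eC; move: S2.2; rewrite Heq2 eqxx => /esym/forallP/(_ e).
    by rewrite eC => /eqP.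
  have N2 : forall u, u \in N -> degX ends C u = 2.
    move=> u uN; move: S1.2; rewrite -Heq1 eqxx => /esym/forallP/(_ u).
    by rewrite uN => /eqP ->.
  have : (0 < #|D|)%N.
    rewrite cD subn_gt0 ltn_neqAle lB andbT.
    apply: contra nBC => /eqP cBC; rewrite eqEcard sBC /=; lia.
  case/card_gt0P => e eD.
  have eC : e \in C by rewrite (subsetP sDC).
  have := D2 e eC; rewrite eD /mult.
  case E1 : ((ends e).1 \in N) => //; case E2 : ((ends e).2 \in N) => // _.
  apply: (nocyc (ends e).1).
    by rewrite inVX; apply/existsP; exists e; rewrite eC /inc eqxx.
  move=> w; rewrite /compX inE => cw; apply: N2.
  apply: conn_closed cw => // f w' fC w'N ifw.
  have fD : f \in D.
    rewrite /D inE fC andbT; apply/negP => fB.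
    move: w'N; rewrite inE => /andP[+ _] => /negP; apply.
    by rewrite inVX; apply/existsP; exists f; rewrite fB.
  have := D2 f fC; rewrite fD /mult.
  by case: ((ends f).1 \in N); case: ((ends f).2 \in N).
Qed.
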